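(* Let $S$ be a numerical semigroup, let $\Lambda\subseteq\mathrm{IBetti}(S)$ and let $s\in S\setminus\Lambda$. Then $\mathrm B(s;\Lambda)\subseteq\mathrm Z(s)\setminus\mathrm I_b(S)$. Moreover, if $\{b\in\mathrm{IBetti}(S): b<_S s\}\subseteq\Lambda$, then $\mathrm B(s;\Lambda)=\mathrm Z(s)\setminus\mathrm I_b(S)$.
   Context: A numerical semigroup $S$ is a submonoid of $(\mathbb N,+)$ with finite complement, minimally generated by $\{n_1,\dots,n_e\}$. Write $a\le_S b$ if $b-a\in S$, and $a<_S b$ if moreover $a\ne b$. Let $\varphi:\mathbb N^e\to S$, $\varphi(a)=\sum_ia_in_i$; for $s\in S$, $\mathrm Z(s)=\varphi^{-1}(s)$. $\nabla_s$ is the graph on $\mathrm Z(s)$ with distinct $x,y$ adjacent iff $x\cdot y\neq0$; $s$ is a Betti element if $\nabla_s$ is disconnected; $\mathrm{Betti}(S)$ is the set of Betti elements. A factorization $z\in\mathrm Z(s)$ is isolated if $z\cdot x=0$ for all $x\in\mathrm Z(s)\setminus\{z\}$; $\mathrm I(s)$ is the set of isolated factorizations of $s$ and, for $\Lambda\subseteq S$, $\mathrm I(\Lambda)=\bigcup_{t\in\Lambda}\mathrm I(t)$. $\mathrm I_s(S)$ is the set of $z\in\mathbb N^e$ such that $\varphi(z)$ has exactly one factorization; $\mathrm I_b(S)=\bigcup_{b\in\mathrm{Betti}(S)}\mathrm I(b)$. $\mathrm{IBetti}(S)$ is the set of Betti elements $b$ with $\mathrm I(b)\ne\emptyset$. For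 $\Lambda\subseteq S$ and $s\in S$, the set of Betti restricted factorizations is $\mathrm B(s;\Lambda)=\{w+x_1+\cdots+x_l\in\mathrm Z(s): w\in\mathrm I_s(S),\ l\ge0,\ x_1,\dots,x_l\in\mathrm I(\Lambda)\}$. *)

(* Defs.v *)
From mathcomp Require Import all_boot.
Set Implicit Arguments. Unset Strict Implicit. Unset Printing Implicit Defensive.

(* A numerical semigroup is given by its minimal generators n : 'I_e -> nat.
   Factorizations are vectors in N^e, represented as {ffun 'I_e -> nat}. *)
Notation fact e := {ffun 'I_e -> nat}.

Section NS.
Variables (e : nat) (n : 'I_e -> nat).

Definition phi (a : fact e) : nat := \sum_(i < e) a i * n i.

Definition inS (s : nat) : Prop := exists a : fact e, phi a = s.

Definition numerical_semigroup_min_gen : Prop :=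
  (exists N, forall m, N <= m -> inS m) /\
  (forall i : 'I_e, ~ exists a : fact e, a i = 0 /\ phi a = n i).

Definition leS (a b : nat) : Prop := a <= b /\ inS (b - a).
Definition ltS (a b : nat) : Prop := leS a b /\ a <> b.

Definition Z (s : nat) (z : fact e) : Prop := phi z = s.

Definition dot (x y : fact e) : nat := \sum_(i < e) x i * y i.

Definition vadd (x y : fact e) : fact e := [ffun i => x i + y i].
Definition vsum (xs : seq (fact e)) : fact e := foldr vadd [ffun => 0] xs.

Definition adj (s : nat) (x y : fact e) : Prop :=
  Z s x /\ Z s y /\ x <> y /\ dot x y <> 0.

Inductive connected_in (s : nat) : fact e -> fact e -> Prop :=
| conn_refl x : connected_in s x x
| conn_step x y w : adj s x y -> connected_in s y w -> connected_in s x w.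

Definition Betti (s : nat) : Prop :=
  exists x y, Z s x /\ Z s y /\ ~ connected_in s x y.

Definition isolated (s : nat) (z : fact e) : Prop :=
  Z s z /\ forall x, Z s x -> x <> z -> dot z x = 0.

Definition I_of (Lam : nat -> Prop) (z : fact e) : Prop :=
  exists t, Lam t /\ isolated t z.

Definition I_s (z : fact e) : Prop := forall x, phi x = phi z -> x = z.

Definition I_b (z : fact e) : Prop := exists b, Betti b /\ isolated b z.

Definition IBetti (b : nat) : Prop := Betti b /\ exists z, isolated b z.

Definition Brf (s : nat) (Lam : nat -> Prop) (z : fact e) : Prop :=
  Z s z /\ exists (w : fact e) (xs : seq (fact e)),
    I_s w /\ (forall x, x \in xs -> I_of Lam x) /\ z = vadd w (vsum xs).

End NS.

(* Main.v *)
Require Import Defs.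
From mathcomp Require Import all_boot.
From mathcomp Require Import zify.
From Stdlib Require Import Classical.
Set Implicit Arguments. Unset Strict Implicit.

Section Aux.
Variables (e : nat) (n : 'I_e -> nat).

Lemma sum0P (F : 'I_e -> nat) : \sum_(i < e) F i = 0 <-> forall i, F i = 0.
Proof.
split.
- move=> /eqP; rewrite sum_nat_eq0 => /forallP H i; exact/eqP/H.
- move=> H; apply/eqP; rewrite sum_nat_eq0; apply/forallP => i; exact/eqP/H.
Qed.

Lemma phi_add (x y : fact e) : phi n (vadd x y) = phi n x + phi n y.
Proof. rewrite /phi -big_split /=; apply: eq_bigr => i _; by rewrite ffunE mulnDl. Qed.

Definition vsub (x y : fact e) : fact e := [ffun i => x i - y i].

Lemma vadd_sub (x y : fact e) : (forall i, y i <= x i) -> vadd y (vsub x y) = x.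
Proof. move=> H; apply/ffunP => i; rewrite !ffunE subnKC //. Qed.

Lemma n_pos (hS : numerical_semigroup_min_gen n) i : 0 < n i.
Proof.
case: hS => _ H; rewrite lt0n; apply/eqP => Hi; apply: (H i).
exists [ffun => 0]; rewrite ffunE; split => //.
rewrite Hi; apply/sum0P => j; by rewrite ffunE.
Qed.

Lemma phi0 (hS : numerical_semigroup_min_gen n) (x : fact e) : phi n x = 0 -> x = [ffun => 0].
Proof.
move=> /sum0P H; apply/ffunP => i; rewrite ffunE.
have := H i => /eqP; rewrite muln_eq0 => /orP [/eqP //|].
by rewrite (gtn_eqF (n_pos hS i)).
Qed.

Lemma conn_ne s (x y : fact e) : x <> y -> (forall x', Z n s x' -> x' <> x -> dot x x' = 0) ->
  ~ connected_in n s x y.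
Proof.
move=> Hne Hiso Hc; inversion Hc; subst => //.
case: H => _ [Hy1 [Hneq Hd]]; apply: Hd; apply: Hiso => //; by move=> E; apply: Hneq.
Qed.

Definition delta (i : 'I_e) : fact e := [ffun j => (j == i : nat)].

Lemma phi_delta i : phi n (delta i) = n i.
Proof.
rewrite /phi (bigD1 i) //= big1 ?addn0; first by rewrite ffunE eqxx mul1n.
move=> j /negbTE Hj; by rewrite ffunE Hj.
Qed.

Lemma minimal (hS : numerical_semigroup_min_gen n) m : forall z : fact e, phi n z = m ->
  (exists x, phi n x = phi n z /\ x <> z) ->
  exists y : fact e, (forall i, y i <= z i) /\ (exists y' : fact e, phi n y' = phi n y /\ y' <> y) /\
    (forall y' : fact e, phi n y' = phi n y -> y' <> y -> dot y y' = 0).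
Proof.
elim/ltn_ind: m => m IH z Hz Hx.
case: (classic (forall y', phi n y' = phi n z -> y' <> z -> dot z y' = 0)) => Hc.
  by exists z; split.
have [y' Hy'] : exists y', ~ (phi n y' = phi n z -> y' <> z -> dot z y' = 0).
  by apply: not_all_ex_not.
have Hy1 : phi n y' = phi n z by apply: NNPP => H; apply: Hy'.
have Hy2 : y' <> z by move=> E; apply: Hy' => _ /(_ E).
have Hy3 : dot z y' <> 0 by move=> E; apply: Hy'.
have [i Hi] : exists i, z i * y' i <> 0.
  apply: NNPP => H; apply: Hy3; apply/sum0P => i; apply: NNPP => H'; apply: H; by exists i.
have Hzi : 0 < z i by move: Hi; case: (z i).
have Hyi : 0 < y' i by move: Hi; rewrite mulnC; case: (y' i).
have lez : forall w : fact e, 0 < w i -> forall j, delta i j <= w j.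
  move=> w Hw j; rewrite ffunE; by case: eqP => [->|].
set z1 := vsub z (delta i); set x1 := vsub y' (delta i).
have Ez := (vadd_sub (lez _ Hzi)); have Ex := (vadd_sub (lez _ Hyi)).
have Pz : phi n z = n i + phi n z1 by rewrite -{1}Ez phi_add phi_delta.
have Px : phi n y' = n i + phi n x1 by rewrite -{1}Ex phi_add phi_delta.
have Hlt : phi n z1 < m by rewrite -Hz Pz -{1}(add0n (phi n z1)) ltn_add2r n_pos.
case: (IH _ Hlt z1 erefl).
  exists x1; split; first by apply/eqP; rewrite -(eqn_add2l (n i)) -Px -Pz Hy1.
  by move=> E; apply: Hy2; rewrite -Ex -Ez -/x1 E.
move=> y [Hle H]; exists y; split => // j.
apply: (leq_trans (Hle j)); rewrite ffunE; exact: leq_subr.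
Qed.

Lemma betti_two b : Betti n b -> exists x y, Z n b x /\ Z n b y /\ x <> y.
Proof.
case=> x [y [Hx [Hy Hc]]]; exists x, y; split => //; split => // E.
by subst; apply: Hc; constructor.
Qed.

Definition Pgood (Lam : nat -> Prop) (z : fact e) := exists (w : fact e) (xs : seq (fact e)),
    I_s n w /\ (forall x, x \in xs -> I_of n Lam x) /\ z = vadd w (vsum xs).

Lemma I_s0 (hS : numerical_semigroup_min_gen n) : I_s n [ffun => 0].
Proof.
move=> x Hx; apply: (phi0 hS); rewrite Hx; apply/sum0P => i; by rewrite ffunE.
Qed.

Lemma main (hS : numerical_semigroup_min_gen n) (Lam : nat -> Prop) m :
  forall z : fact e, phi n z = m ->
  (forall b, IBetti n b -> ltS n b m -> Lam b) -> Pgood Lam z \/ I_b n z.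
Proof.
elim/ltn_ind: m => m IH z Hz HQ.
case: (classic (I_s n z)) => Hs.
  left; exists z, [::]; split => //; split => //.
  by apply/ffunP => i; rewrite !ffunE addn0.
have [x Hx] : exists x, phi n x = phi n z /\ x <> z.
  apply: NNPP => H; apply: Hs => x Hx; apply: NNPP => Hne; apply: H; by exists x.
have [y [Hle [[y' [Hy'1 Hy'2]] Hiso]]] := minimal hS erefl (ex_intro _ x Hx).
set t := phi n y.
have Hisol : isolated n t y by split => // x' Hx' Hne; apply: Hiso.
have HB : Betti n t.
  exists y, y'; split => //; split => //.
  apply: conn_ne; first by move=> E; apply: Hy'2.
  move=> x' Hx' Hne; exact: Hiso.
have Ht : 0 < t.
  rewrite lt0n; apply/eqP => E; apply: Hy'2.
  by rewrite (phi0 hS E) (phi0 hS (etrans Hy'1 E)).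
set u := vsub z y.
have Ez := vadd_sub Hle.
have Pz : phi n z = t + phi n u by rewrite -{1}Ez phi_add.
case: (posnP (phi n u)) => Hu.
  right; exists t; split => //.
  have Eu := phi0 hS Hu.
  suff -> : z = y by [].
  by rewrite -Ez -/u Eu; apply/ffunP => i; rewrite !ffunE addn0.
have HLt : Lam t.
  apply: HQ; first by split => //; exists y.
  rewrite -Hz; split; last by rewrite Pz => E; move: Hu; rewrite -(addKn t (phi n u)) -E subnn.
  split; first by rewrite Pz leq_addr.
  by exists u; rewrite Pz addKn.
have Hlt : phi n u < m by rewrite -Hz Pz -{1}(add0n (phi n u)) ltn_add2r.
have HQu : forall b, IBetti n b -> ltS n b (phi n u) -> Lam b.
  move=> b Hb [[Hb1 [a Ha]] Hb2]; apply: HQ => //; rewrite -Hz; split.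
    split; first by rewrite Pz (leq_trans Hb1) // leq_addl.
    exists (vadd a y); rewrite phi_add Ha Pz -/t addnC -addnBA //.
  move=> E; move: Hb1; rewrite E Pz => H.
  by move: H; rewrite -{2}(add0n (phi n u)) leq_add2r leqn0 => /eqP E0; move: Ht; rewrite E0.
case: (IH _ Hlt u erefl HQu) => [[w [xs [Hw [Hxs Eu]]]] | [b [Hb Hbu]]].
  left; exists w, (y :: xs); split => //; split.
    move=> x0; rewrite in_cons => /orP [/eqP -> | /Hxs //]; by exists t.
  rewrite -Ez -/u Eu /vsum /=; apply/ffunP => i; rewrite !ffunE addnCA //.
have Ebu : phi n u = b by case: Hbu.
left; exists [ffun => 0], [:: y; u]; split; first exact: I_s0.
split.
  move=> x0; rewrite !in_cons orbF => /orP [/eqP -> | /eqP ->]; first by exists t.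
  exists b; split => //; apply: HQ.
    by split => //; exists u.
  rewrite -Hz -Ebu; split.
    split; first by rewrite Pz leq_addl.
    by exists y; rewrite Pz addnK.
  rewrite Pz => E; clearbody t u; lia.
rewrite -Ez /vsum /=; apply/ffunP => i; rewrite !ffunE !addn0 add0n //.
Qed.

End Aux.

Theorem lemma5p4 (e : nat) (n : 'I_e -> nat)
  (hS : numerical_semigroup_min_gen n)
  (Lam : nat -> Prop) (hLam : forall b, Lam b -> IBetti n b)
  (s : nat) (hs : inS n s) (hsL : ~ Lam s) :
  (forall z, Brf n s Lam z -> Z n s z /\ ~ I_b n z) /\
  ((forall b, IBetti n b -> ltS n b s -> Lam b) ->
   forall z, Brf n s Lam z <-> Z n s z /\ ~ I_b n z).
Proof.
have part1 : forall z, Brf n s Lam z -> Z n s z /\ ~ I_b n z.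
  move=> z [Hz [w [xs [Hw [Hxs Ez]]]]]; split => //.
  move=> [b [Hb [Hzb Hiso]]].
  have Ebs : b = s by rewrite -Hzb.
  case: xs Hxs Ez => [|x1 rest] Hxs Ez.
    have [x [y [Hx [Hy Hne]]]] := betti_two Hb.
    have Ezw : z = w by rewrite Ez; apply/ffunP => i; rewrite !ffunE addn0.
    have Hpw : phi n w = b by rewrite -Ezw.
    apply: Hne; rewrite (Hw x); last by rewrite Hx Hpw.
    by rewrite (Hw y) // Hy Hpw.
  have [t [Ht [Hx1 Hx1iso]]] : I_of n Lam x1 by apply: Hxs; rewrite in_cons eqxx.
  have [a [c [Ha [Hc Hac]]]] := betti_two (proj1 (hLam _ Ht)).
  have [y [Hy Hyne]] : exists y, Z n t y /\ y <> x1.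
    case: (classic (a = x1)) => [E|]; last by exists a.
    by exists c; split => // E'; apply: Hac; rewrite E E'.
  set r := vadd w (vsum rest).
  have Ez' : z = vadd x1 r.
    by rewrite Ez /vsum /=; apply/ffunP => i; rewrite !ffunE addnCA.
  set z' := vadd r y.
  have Hz' : Z n b z'.
    by rewrite /Z /z' phi_add Hy -Hx1 -phi_add -Hzb Ez'; congr phi; apply/ffunP => i; rewrite !ffunE addnC.
  have Hne : z' <> z.
    move=> E; apply: Hyne; apply/ffunP => i.
    have := congr1 (fun f : fact e => f i) E; rewrite Ez' !ffunE => /eqP.
    by rewrite addnC eqn_add2r => /eqP.
  have /sum0P Hd := Hiso _ Hz' Hne.
  have Er : r = [ffun => 0].
    apply/ffunP => i; have := Hd i; rewrite Ez' /z'; clearbody r; rewrite !ffunE.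
    case: (r i) => // k /eqP; by rewrite muln_eq0 !addnS.
  apply: hsL; rewrite -Ebs -Hzb Ez' Er; suff -> : vadd x1 [ffun => 0] = x1 by rewrite Hx1.
  by apply/ffunP => i; rewrite !ffunE addn0.
split => // HQ z; split; first exact: part1.
move=> [Hz HnI]; split => //.
case: (main hS (m := s) Hz HQ) => [[w [xs H]] | /HnI []]; by exists w, xs.
Qed.
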